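(* In the setting of the context, for all $b\in B$ and $y\in M_1$ we have $yb=\lambda^{-1}b_{(2)}E_{M_1}(e_2yb_{(1)})$, where $\Delta(b)=b_{(1)}\otimes b_{(2)}$.
   Context: $k$ is a field; $C_R(S)=\{r\in R:rs=sr\ \forall s\in S\}$. $N\subseteq M$ is a strongly separable, irreducible extension of $k$-algebras: $C_M(N)=k1$ and there are an $N$-bimodule map $E:M\to N$ and $x_1,\dots,x_n,y_1,\dots,y_n\in M$ with $\sum_iE(mx_i)y_i=m=\sum_ix_iE(y_im)$ for all $m\in M$, $E(1)\neq0$, $\sum_ix_iy_i\neq0$; normalized so that $E(1)=1$, whence $\sum_ix_iy_i=\lambda^{-1}1$ with $0\neq\lambda\in k$. Basic construction: given $S\subseteq R$, an $S$-bimodule map $E_S:R\to S$ with $E_S(1)=1$ and $r_i,s_i\in R$ with $\sum_iE_S(rr_i)s_i=r=\sum_ir_iE_S(s_ir)$ and $\sum_ir_is_i=\lambda^{-1}1$, set $R_1=R\otimes_SR$ with product $(a\otimes b)(c\otimes d)=aE_S(bc)\otimes d$, unit $\sum_ir_i\otimes s_i$, $R\subseteq R_1$ via $r\mapsto\sum_irr_i\otimes s_i$, Jones idempotent $e=1\otimes1$, $E_R:R_1\to R$, $a\otimes b\mapsto\lambda ab$; then $E_R$, $\lambda^{-1}r_i\otimes1$, $1\otimes s_i$ satisfy the same conditions with the same $\lambda$. From $(N\subseteq M,E)$ get $M_1,e_1,E_M$; from $(M\subseteq M_1,E_M)$ get $M_2,e_2,E_{M_1}$. Let $A=C_{M_1}(N)$,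 $B=C_{M_2}(M)$, $C=C_{M_2}(N)$. Depth 2 is assumed: $M_1$ is free as right $M$-module with basis in $A$, $M_2$ free as right $M_1$-module with basis in $B$. Let $F=E_M\circ E_{M_1}$, with values on $C$ in $k1\cong k$. The bilinear form $\langle a,b\rangle=\lambda^{-2}F(ae_2e_1b)$ ($a\in A,b\in B$) is non-degenerate, and the comultiplication $\Delta:B\to B\otimes B$, $b\mapsto b_{(1)}\otimes b_{(2)}$, is defined by $\langle a,b_{(1)}\rangle\langle a',b_{(2)}\rangle=\langle aa',b\rangle$ for all $a,a'\in A$. *)

(* Defs.v *)
(* The whole tower N ⊆ M ⊆ M1 ⊆ M2 is realised inside one
   ambient k-algebra R; subalgebras are Prop-valued predicates on R. *)
From HB Require Import structures.
From mathcomp Require Import all_boot all_algebra.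
Set Implicit Arguments. Unset Strict Implicit. Unset Printing Implicit Defensive.
Import GRing.Theory.
Local Open Scope ring_scope.

Section Defs.
Variables (k : fieldType) (R : algType k).

Definition subalg (S : R -> Prop) : Prop :=
  [/\ S 1, (forall x y, S x -> S y -> S (x + y)),
      (forall x y, S x -> S y -> S (x * y)) &
      (forall (c : k) x, S x -> S (c *: x))].

Definition subset (S T : R -> Prop) : Prop := forall x, S x -> T x.

Definition centralizer (T S : R -> Prop) : R -> Prop :=
  fun r => T r /\ forall s, S s -> r * s = s * r.

Definition bimodule_map (S T : R -> Prop) (E : R -> R) : Prop :=
  [/\ forall x, T x -> S (E x),
      forall x y, T x -> T y -> E (x + y) = E x + E y,
      forall (c : k) x, T x -> E (c *: x) = c *: E x &
      forall a x b, S a -> T x -> S b -> E (a * x * b) = a * E x * b].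

Definition quasi_basis (S T : R -> Prop) (E : R -> R) n (x y : 'I_n -> R) : Prop :=
  (forall i, T (x i) /\ T (y i)) /\
  (forall m, T m -> \sum_(i < n) E (m * x i) * y i = m /\
                    \sum_(i < n) x i * E (y i * m) = m).

(* N ⊆ M strongly separable, irreducible, normalised with E(1)=1,
   sum_i x_i y_i = lam^-1 1, lam <> 0 *)
Record ss_irreducible (N M : R -> Prop) (E : R -> R) n (x y : 'I_n -> R)
  (lam : k) : Prop := {
  ssi_subN : subalg N;
  ssi_subM : subalg M;
  ssi_NM : subset N M;
  ssi_E : bimodule_map N M E;
  ssi_qb : quasi_basis N M E x y;
  ssi_E1 : E 1 = 1;
  ssi_lam : \sum_(i < n) x i * y i = lam^-1 *: 1;
  ssi_lam0 : lam != 0;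
  ssi_irr : forall m, centralizer M N m -> exists c : k, m = c *: 1 }.

(* T1 (together with e, ET) is the basic construction of (S ⊆ T, ES, r, s, lam):
   T1 ≅ T ⊗_S T via a ⊗ b |-> a e b  (so e = 1 ⊗ 1), T ⊆ T1 via the unital
   embedding (sum_i r_i e s_i = 1), product (a e b)(c e d) = a ES(bc) e d,
   and ET(a e b) = lam a b. *)
Record basic_construction (S T T1 : R -> Prop) (ES : R -> R) n
  (r s : 'I_n -> R) (lam : k) (e : R) (ET : R -> R) : Prop := {
  bc_sub : subalg T1;
  bc_incl : subset T T1;
  bc_e : T1 e;
  bc_eS : forall a, S a -> e * a = a * e;
  bc_eTe : forall a, T a -> e * a * e = ES a * e;
  bc_unit : \sum_(i < n) r i * e * s i = 1;
  bc_span : forall z, T1 z -> exists m (a b : 'I_m -> R),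
      (forall j, T (a j) /\ T (b j)) /\ z = \sum_(j < m) a j * e * b j;
  bc_ET : forall a b, T a -> T b -> ET (a * e * b) = lam *: (a * b);
  bc_ETadd : forall z w, T1 z -> T1 w -> ET (z + w) = ET z + ET w;
  bc_ETscale : forall (c : k) z, T1 z -> ET (c *: z) = c *: ET z }.

Definition right_free_basis (Sub T : R -> Prop) n (u : 'I_n -> R) : Prop :=
  (forall i, T (u i)) /\
  (forall z, T z -> exists c : 'I_n -> R,
      (forall i, Sub (c i)) /\ z = \sum_(i < n) u i * c i) /\
  (forall c : 'I_n -> R, (forall i, Sub (c i)) ->
      \sum_(i < n) u i * c i = 0 -> forall i, c i = 0).

Definition depth2 (N M M1 M2 : R -> Prop) : Prop :=
  (exists n (u : 'I_n -> R), (forall i, centralizer M1 N (u i)) /\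
      right_free_basis M M1 u) /\
  (exists n (u : 'I_n -> R), (forall i, centralizer M2 M (u i)) /\
      right_free_basis M1 M2 u).

(* <a, b> = lam^-2 F(a e2 e1 b), F = E_M o E_{M1}; value in k1 ⊆ R *)
Definition pairing (lam : k) (EM EM1 : R -> R) (e1 e2 a b : R) : R :=
  lam ^- 2 *: EM (EM1 (a * e2 * e1 * b)).

End Defs.

(* Main.v *)
Require Import Defs.
From HB Require Import structures.
From mathcomp Require Import all_boot all_algebra.
Import GRing.Theory.
Local Open Scope ring_scope.
From mathcomp Require Import ring.
From Stdlib Require Import IndefiniteDescription.
Set Implicit Arguments. Unset Strict Implicit. Unset Printing Implicit Defensive.

Section SubalgFacts.
Variables (k : fieldType) (R : algType k).
Implicit Types (P : R -> Prop).

Lemma sa1 P : subalg P -> P 1. Proof. by case. Qed.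
Lemma sa_add P x y : subalg P -> P x -> P y -> P (x + y). Proof. by case=> _ h _ _; apply: h. Qed.
Lemma sa_mul P x y : subalg P -> P x -> P y -> P (x * y). Proof. by case=> _ _ h _; apply: h. Qed.
Lemma sa_scale P (c : k) x : subalg P -> P x -> P (c *: x). Proof. by case=> _ _ _ h; apply: h. Qed.
Lemma sa0 P : subalg P -> P 0.
Proof. by move=> h; rewrite -(scale0r (1 : R)); apply: sa_scale=> //; exact: sa1. Qed.
Lemma sa_opp P x : subalg P -> P x -> P (- x).
Proof. by move=> h hx; rewrite -scaleN1r; exact: sa_scale. Qed.
Lemma sa_sub P x y : subalg P -> P x -> P y -> P (x - y).
Proof. by move=> h hx hy; apply: sa_add=> //; exact: sa_opp. Qed.
Lemma sa_sum P m (F : 'I_m -> R) : subalg P -> (forall i, P (F i)) -> P (\sum_(i < m) F i).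
Proof.
move=> h hF; apply: (big_ind P) => //; first exact: sa0.
by move=> x y; exact: sa_add.
Qed.

Lemma lin_sum P (f : R -> R) : subalg P ->
  (forall x y, P x -> P y -> f (x + y) = f x + f y) ->
  (forall (c : k) x, P x -> f (c *: x) = c *: f x) ->
  forall m (F : 'I_m -> R), (forall i, P (F i)) ->
  f (\sum_(i < m) F i) = \sum_(i < m) f (F i).
Proof.
move=> hP hadd hsc; elim=> [|m IH] F hF.
  by rewrite !big_ord0; have := hsc 0 0 (sa0 hP); rewrite !scale0r.
rewrite !big_ord_recr /= hadd ?IH //; exact: sa_sum.
Qed.

Lemma lin_sub P (f : R -> R) : subalg P ->
  (forall x y, P x -> P y -> f (x + y) = f x + f y) ->
  (forall (c : k) x, P x -> f (c *: x) = c *: f x) ->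
  forall x y, P x -> P y -> f (x - y) = f x - f y.
Proof.
move=> hP hadd hsc x y hx hy.
have -> : x - y = x + (-1) *: y by rewrite scaleN1r.
rewrite hadd; last exact: (sa_scale (-1) hP hy); last by []. 
by rewrite hsc // scaleN1r.
Qed.

Lemma lin0 P (f : R -> R) : subalg P ->
  (forall (c : k) x, P x -> f (c *: x) = c *: f x) -> f 0 = 0.
Proof. by move=> hP hsc; have := hsc 0 0 (sa0 hP); rewrite !scale0r. Qed.

Lemma scal_comm (c : k) (x : R) : (c *: 1) * x = x * (c *: 1).
Proof. by rewrite -scalerAl mul1r -scalerAr mulr1. Qed.

End SubalgFacts.

Create HintDb memdb.
Ltac mem_step := match goal with
 | |- ?P (?a * ?b) => refine (@sa_mul _ _ P a b _ _ _)
 | |- ?P (?a - ?b) => refine (@sa_sub _ _ P a b _ _ _)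
 | |- ?P (?a + ?b) => refine (@sa_add _ _ P a b _ _ _)
 | |- ?P (?c *: ?a) => refine (@sa_scale _ _ P c a _ _)
 | |- ?P (@bigop.body _ _ _ _ _) => apply: (@sa_sum _ _ P); [|intro]
 | |- ?P 1 => refine (@sa1 _ _ P _)
 | |- ?P 0 => refine (@sa0 _ _ P _)
 end.
Ltac mem_extra := fail.
Ltac mem := repeat (first [assumption | solve [auto with memdb] | mem_step | mem_extra]).


Lemma fin_choice (X : Type) m (P : 'I_m -> X -> Prop) :
  (forall i, exists x, P i x) -> exists F : 'I_m -> X, forall i, P i (F i).
Proof.
move=> h; exists (fun i => proj1_sig (constructive_indefinite_description _ (h i))).
by move=> i; case: (constructive_indefinite_description _ (h i)).
Qed.

Section BCfacts.
Variables (k : fieldType) (R : algType k).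
Variables (S T T1 : R -> Prop) (ES ET : R -> R) (n : nat) (r s : 'I_n -> R)
  (lam : k) (e : R).
Hypotheses (hT : subalg T) (hST : Defs.subset S T) (hES : forall x, T x -> S (ES x))
  (hqb : quasi_basis S T ES r s)
  (hbc : basic_construction S T T1 ES r s lam e ET) (hlam : lam != 0).

Lemma hT1 : subalg T1. Proof. exact: (bc_sub hbc). Qed.
Lemma T_T1 x : T x -> T1 x. Proof. move=> h; exact: (bc_incl hbc h). Qed.
Lemma e_T1 : T1 e. Proof. exact: (bc_e hbc). Qed.
Lemma r_T i : T (r i). Proof. by case: hqb=> h _; case: (h i). Qed.
Lemma s_T i : T (s i). Proof. by case: hqb=> h _; case: (h i). Qed.
Lemma ES_T x : T x -> T (ES x). Proof. by move=> h; apply: hST; apply: hES. Qed.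
Lemma S_T x : S x -> T x. Proof. exact: hST. Qed.
Local Hint Resolve hT hT1 T_T1 e_T1 r_T s_T ES_T S_T : memdb.
Ltac mem_extra ::= match goal with
  | |- T (ES _) => apply: ES_T
  end.

Lemma ET_add x y : T1 x -> T1 y -> ET (x + y) = ET x + ET y.
Proof. move=> hx hy; exact: (bc_ETadd hbc hx hy). Qed.
Lemma ET_scale (c : k) x : T1 x -> ET (c *: x) = c *: ET x.
Proof. move=> hx; exact: (bc_ETscale hbc c hx). Qed.
Lemma ET_sum m (F : 'I_m -> R) : (forall i, T1 (F i)) ->
  ET (\sum_(i < m) F i) = \sum_(i < m) ET (F i).
Proof. exact: (lin_sum hT1 ET_add ET_scale). Qed.
Lemma ET_sub x y : T1 x -> T1 y -> ET (x - y) = ET x - ET y.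
Proof. exact: (lin_sub hT1 ET_add ET_scale). Qed.
Lemma ET0 : ET 0 = 0.
Proof. exact: (lin0 hT1 ET_scale). Qed.
Lemma ET_aeb a b : T a -> T b -> ET (a * e * b) = lam *: (a * b).
Proof. move=> ha hb; exact: (bc_ET hbc ha hb). Qed.
Lemma eTe a : T a -> e * a * e = ES a * e.
Proof. move=> h; exact: (bc_eTe hbc h). Qed.
Lemma eS a : S a -> e * a = a * e.
Proof. move=> h; exact: (bc_eS hbc h). Qed.

Lemma ET_span m (a b : 'I_m -> R) : (forall j, T (a j) /\ T (b j)) ->
  ET (\sum_(j < m) a j * e * b j) = lam *: \sum_(j < m) a j * b j.
Proof.
move=> hab; rewrite ET_sum; last by move=> j; case: (hab j)=> ??; mem.
rewrite scaler_sumr; apply: eq_bigr=> j _; case: (hab j)=> ??.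
exact: ET_aeb.
Qed.

Lemma ET_T z : T1 z -> T (ET z).
Proof.
move=> hz; case: (bc_span hbc hz)=> m [a [b [hab ->]]].
rewrite ET_span //; mem; by case: (hab i).
Qed.
Local Hint Resolve ET_T : memdb.
Ltac mem_extra ::= match goal with
  | |- T (ES _) => apply: ES_T
  | |- T (ET _) => apply: ET_T
  end.

Lemma ET_bim a z c : T a -> T1 z -> T c -> ET (a * z * c) = a * ET z * c.
Proof.
move=> ha hz hc; case: (bc_span hbc hz)=> m [a' [b' [hab ->]]].
rewrite ET_span // mulr_sumr mulr_suml.
have -> : \sum_(i < m) a * (a' i * e * b' i) * c =
          \sum_(i < m) (a * a' i) * e * (b' i * c).
  by apply: eq_bigr=> i _; rewrite !mulrA.
rewrite ET_span; last by move=> j; case: (hab j)=> ??; split; mem.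
rewrite -scalerAr -scalerAl; congr (_ *: _).
rewrite mulr_sumr mulr_suml; apply: eq_bigr=> i _; by rewrite !mulrA.
Qed.

Lemma ET_l a z : T a -> T1 z -> ET (a * z) = a * ET z.
Proof. by move=> ha hz; have := ET_bim ha hz (sa1 hT); rewrite !mulr1. Qed.
Lemma ET_r z c : T1 z -> T c -> ET (z * c) = ET z * c.
Proof. by move=> hz hc; have := ET_bim (sa1 hT) hz hc; rewrite !mul1r. Qed.

Lemma qb_right z : T1 z ->
  \sum_(i < n) (lam^-1 *: (r i * e)) * ET (e * s i * z) = z.
Proof.
move=> hz; case: (bc_span hbc hz)=> m [a [b [hab hzd]]].
have hterm : forall i, ET (e * s i * z) = \sum_(j < m) lam *: (ES (s i * a j) * b j).
  move=> i; rewrite hzd mulr_sumr ET_sum; last by move=> j; case: (hab j)=> ??; mem.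
  apply: eq_bigr=> j _; case: (hab j)=> ha hb.
  have -> : e * s i * (a j * e * b j) = ES (s i * a j) * e * b j.
    by rewrite -eTe ?mulrA //; mem.
  by apply: ET_aeb; mem.
under eq_bigr=> i _ do rewrite hterm mulr_sumr.
rewrite exchange_big /= [RHS]hzd; apply: eq_bigr=> j _.
case: (hqb)=> _ /(_ (a j)); case: (hab j)=> ha hb /(_ ha) [_ hq].
transitivity ((\sum_(i < n) r i * ES (s i * a j)) * e * b j); last by rewrite hq.
rewrite !mulr_suml; apply: eq_bigr=> i _.
rewrite -scalerAr -scalerAl scalerA ?mulVf ?mulfV // scale1r.
rewrite -!mulrA; congr (_ * _); rewrite !mulrA -eS //.
apply: hES; mem.
Qed.

Lemma qb_left z : T1 z ->
  \sum_(i < n) ET (z * (lam^-1 *: (r i * e))) * (e * s i) = z.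
Proof.
move=> hz; case: (bc_span hbc hz)=> m [a [b [hab hzd]]].
have hterm : forall i, ET (z * (lam^-1 *: (r i * e))) =
    \sum_(j < m) a j * ES (b j * r i).
  move=> i; rewrite -scalerAr ET_scale; last by mem.
  rewrite hzd mulr_suml ET_sum; last by move=> j; case: (hab j)=> ??; mem.
  rewrite scaler_sumr; apply: eq_bigr=> j _; case: (hab j)=> ha hb.
  have -> : a j * e * b j * (r i * e) = (a j * ES (b j * r i)) * e * 1.
    rewrite mulr1 -(mulrA (a j) (ES _)) -eTe; last by mem.
    by rewrite !mulrA.
  rewrite ET_aeb; [|mem|mem].
  by rewrite mulr1 scalerA ?mulVf ?mulfV // scale1r.
under eq_bigr=> i _ do rewrite hterm mulr_suml.
rewrite exchange_big /= [RHS]hzd; apply: eq_bigr=> j _.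
case: (hqb)=> _ /(_ (b j)); case: (hab j)=> ha hb /(_ hb) [hq _].
transitivity (a j * e * \sum_(i < n) ES (b j * r i) * s i); last by rewrite hq.
rewrite mulr_sumr; apply: eq_bigr=> i _.
rewrite !mulrA -(mulrA _ _ e) -eS ?mulrA //.
apply: hES; mem.
Qed.

Lemma qb_T1 : quasi_basis T T1 ET (fun i => lam^-1 *: (r i * e)) (fun i => e * s i).
Proof.
split; first by move=> i; split; mem.
move=> z hz; split; first exact: qb_left.
exact: qb_right.
Qed.

Lemma ET_bimodule : bimodule_map T T1 ET.
Proof.
split; [exact: ET_T|exact: ET_add|exact: ET_scale|].
by move=> a x b ha hx hb; apply: ET_bim.
Qed.

Lemma ET1 : \sum_(i < n) r i * s i = lam^-1 *: 1 -> ET 1 = 1.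
Proof.
move=> hsum; rewrite -{1}(bc_unit hbc) ET_span; last by move=> j; split; mem.
by rewrite hsum scalerA mulfV // scale1r.
Qed.

Lemma cancel_e t : T t -> t * e = 0 -> t = 0.
Proof.
move=> ht h; have := ET_aeb ht (sa1 hT).
rewrite h mul0r mulr1 ET0 => /esym h2.
by rewrite -[t]scale1r -(mulVf hlam) -scalerA h2 scaler0.
Qed.

Lemma ze_form z : T1 z -> exists w, T w /\ z * e = w * e.
Proof.
move=> hz; case: (bc_span hbc hz)=> m [a [b [hab ->]]].
exists (\sum_(j < m) a j * ES (b j)); split.
  by mem; case: (hab i).
rewrite !mulr_suml; apply: eq_bigr=> j _; case: (hab j)=> ??.
by rewrite -!mulrA (mulrA e) eTe // !mulrA.
Qed.

Lemma irr_up : (forall m, centralizer T S m -> exists c : k, m = c *: 1) ->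
  forall z, centralizer T1 T z -> exists c : k, z = c *: 1.
Proof.
move=> hirr z [hz hcomm].
case: (ze_form hz)=> w [hw hzw].
have hwc : centralizer T S w.
  split=> // sg hsg.
  apply/eqP; rewrite -subr_eq0; apply/eqP; apply: cancel_e; first by mem.
  have h1 : w * sg * e = sg * (w * e).
    rewrite -(mulrA w sg e) -(eS hsg) (mulrA w e sg) -hzw -(mulrA z e sg).
    by rewrite (eS hsg) (mulrA z sg e) (hcomm sg (hST hsg)) -(mulrA sg z e) hzw.
  by rewrite mulrBl h1 mulrA subrr.
case: (hirr w hwc)=> c hc; exists c.
apply/eqP; rewrite -subr_eq0; apply/eqP.
set z' := z - c *: 1.
have hz' : T1 z' by rewrite /z'; mem.
have h0 : forall t, T t -> z' * (t * e) = 0.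
  move=> t ht; rewrite /z' mulrBl mulrA hcomm // -mulrA hzw hc.
  by rewrite -!scalerAl !mul1r -scalerAr subrr.
rewrite -(qb_left hz'); apply: big1=> i _.
by rewrite -scalerAr h0 ?scaler0 ?ET0 ?mul0r //; mem.
Qed.

Lemma dual_basis p (u : 'I_p -> R) : (forall i, centralizer T1 S (u i)) ->
  right_free_basis T T1 u ->
  exists f : 'I_p -> R, (forall i, centralizer T1 S (f i)) /\
    (forall z, T1 z -> z = \sum_(i < p) u i * ET (f i * z)).
Proof.
move=> hu [huT [hspan huniq]].
have hR : forall i, T1 (lam^-1 *: (r i * e)) by move=> i; mem.
have := @fin_choice _ _ (fun i (c : 'I_p -> R) => (forall j, T (c j)) /\
   lam^-1 *: (r i * e) = \sum_(j < p) u j * c j) (fun i => hspan _ (hR i)).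
case=> d hd.
have hdT : forall i j, T (d i j) by move=> i j; exact: (hd i).1.
pose f j := \sum_(i < n) d i j * (e * s i).
have hf : forall j, T1 (f j) by move=> j; rewrite /f; mem.
have hexp : forall z, T1 z -> z = \sum_(j < p) u j * ET (f j * z).
  move=> z hz; rewrite -{1}(qb_right hz).
  have -> : \sum_(j < p) u j * ET (f j * z) =
            \sum_(j < p) \sum_(i < n) u j * d i j * ET (e * s i * z).
    apply: eq_bigr=> j _; rewrite /f mulr_suml ET_sum; last by move=> i; mem.
    rewrite mulr_sumr; apply: eq_bigr=> i _.
    by rewrite -mulrA ET_l ?mulrA //; mem.
  rewrite exchange_big /=; apply: eq_bigr=> i _.
  by rewrite (hd i).2 mulr_suml.
exists f; split=> // j; split=> // sg hsg.
have hsgT : T sg by apply: hST.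
have huT1 : forall i, T1 (u i) by move=> i; exact: (hu i).1.
have hzero : forall z, T1 z -> ET ((f j * sg - sg * f j) * z) = 0.
  move=> z hz.
  have h1 : sg * z = \sum_(j < p) u j * ET (f j * (sg * z)).
    by apply: hexp; mem.
  have h2 : sg * z = \sum_(j < p) u j * ET (sg * f j * z).
    rewrite {1}(hexp z hz) mulr_sumr; apply: eq_bigr=> j' _.
    rewrite -(mulrA sg (f j') z) (ET_l hsgT); last by mem.
    by rewrite mulrA -(hu j').2 // -mulrA.
  have h3 : \sum_(j < p) u j * (ET (f j * (sg * z)) - ET (sg * f j * z)) = 0.
    rewrite (eq_bigr (fun j => u j * ET (f j * (sg * z)) - u j * ET (sg * f j * z))).
      by rewrite sumrB -h1 -h2 subrr.
    by move=> i _; rewrite mulrBr.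
  have hc : forall i, T (ET (f i * (sg * z)) - ET (sg * f i * z)) by move=> i; mem.
  have := huniq _ hc h3 j; rewrite mulrA => <-.
  by rewrite mulrBl ET_sub //; mem.
apply/eqP; rewrite -subr_eq0; apply/eqP.
have hW : T1 (f j * sg - sg * f j) by mem.
rewrite -(qb_left hW); apply: big1=> i _; rewrite hzero ?mul0r //; mem.
Qed.

End BCfacts.


Section Main.
Variables (k : fieldType) (R : algType k)
  (N M M1 M2 : R -> Prop) (E EM EM1 : R -> R) (n : nat) (xs ys : 'I_n -> R)
  (lam : k) (e1 e2 : R).
Hypotheses (hssi : ss_irreducible N M E xs ys lam)
  (hbc1 : basic_construction N M M1 E xs ys lam e1 EM)
  (hbc2 : basic_construction M M1 M2 EM (fun i => lam^-1 *: (xs i * e1))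
    (fun i => e1 * ys i) lam e2 EM1)
  (hd2 : depth2 N M M1 M2).

Lemma hN : subalg N. Proof. exact: (ssi_subN hssi). Qed.
Lemma hM : subalg M. Proof. exact: (ssi_subM hssi). Qed.
Lemma hNM : Defs.subset N M. Proof. exact: (ssi_NM hssi). Qed.
Lemma hlam : lam != 0. Proof. exact: (ssi_lam0 hssi). Qed.
Lemma hqb : quasi_basis N M E xs ys. Proof. exact: (ssi_qb hssi). Qed.
Lemma hEN x : M x -> N (E x). Proof. by case: (ssi_E hssi)=> h _ _ _; apply: h. Qed.
Lemma hM1 : subalg M1. Proof. exact: (hT1 hbc1). Qed.
Lemma hM2 : subalg M2. Proof. exact: (hT1 hbc2). Qed.
Lemma N_M x : N x -> M x. Proof. exact: hNM. Qed.
Lemma M_M1 x : M x -> M1 x. Proof. exact: (T_T1 hbc1). Qed.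
Lemma M1_M2 x : M1 x -> M2 x. Proof. exact: (T_T1 hbc2). Qed.
Lemma hMM1 : Defs.subset M M1. Proof. exact: M_M1. Qed.
Lemma e1_M1 : M1 e1. Proof. exact: (e_T1 hbc1). Qed.
Lemma e2_M2 : M2 e2. Proof. exact: (e_T1 hbc2). Qed.
Lemma xs_M i : M (xs i). Proof. exact: (r_T hqb). Qed.
Lemma ys_M i : M (ys i). Proof. exact: (s_T hqb). Qed.
Lemma EM_M z : M1 z -> M (EM z). Proof. exact: (ET_T hM hbc1). Qed.
Lemma EM1_M1 z : M2 z -> M1 (EM1 z). Proof. exact: (ET_T hM1 hbc2). Qed.
Lemma hqb2 : quasi_basis M M1 EM (fun i => lam^-1 *: (xs i * e1)) (fun i => e1 * ys i).
Proof. exact: (qb_T1 hM hNM hEN hqb hbc1 hlam). Qed.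

Local Hint Resolve hN hM hM1 hM2 N_M M_M1 M1_M2 e1_M1 e2_M2 xs_M ys_M EM_M EM1_M1 hEN : memdb.
Ltac mem_extra ::= match goal with
  | |- M (EM _) => apply: EM_M
  | |- M1 (EM1 _) => apply: EM1_M1
  | |- N (E _) => apply: hEN
  | |- M2 (EM1 _) => apply: M1_M2
  | |- M1 (EM _) => apply: M_M1
  | |- M2 (EM _) => apply: M1_M2
  | |- M1 (E _) => apply: M_M1
  | |- M (E _) => apply: N_M
  end.

Lemma EM_add x y : M1 x -> M1 y -> EM (x + y) = EM x + EM y. Proof. exact: (ET_add hbc1). Qed.
Lemma EM_scale (c : k) x : M1 x -> EM (c *: x) = c *: EM x. Proof. exact: (ET_scale hbc1). Qed.
Lemma EM_sub x y : M1 x -> M1 y -> EM (x - y) = EM x - EM y. Proof. exact: (ET_sub hbc1). Qed.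
Lemma EM_sum m (F : 'I_m -> R) : (forall i, M1 (F i)) -> EM (\sum_(i < m) F i) = \sum_(i < m) EM (F i).
Proof. exact: (ET_sum hbc1). Qed.
Lemma EM_bim a z c : M a -> M1 z -> M c -> EM (a * z * c) = a * EM z * c.
Proof. exact: (ET_bim hM hbc1). Qed.
Lemma EM_l a z : M a -> M1 z -> EM (a * z) = a * EM z.
Proof. exact: (ET_l hM hbc1). Qed.
Lemma EM_r z c : M1 z -> M c -> EM (z * c) = EM z * c.
Proof. exact: (ET_r hM hbc1). Qed.
Lemma EM1_add x y : M2 x -> M2 y -> EM1 (x + y) = EM1 x + EM1 y. Proof. exact: (ET_add hbc2). Qed.
Lemma EM1_scale (c : k) x : M2 x -> EM1 (c *: x) = c *: EM1 x. Proof. exact: (ET_scale hbc2). Qed.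
Lemma EM1_sub x y : M2 x -> M2 y -> EM1 (x - y) = EM1 x - EM1 y. Proof. exact: (ET_sub hbc2). Qed.
Lemma EM1_sum m (F : 'I_m -> R) : (forall i, M2 (F i)) -> EM1 (\sum_(i < m) F i) = \sum_(i < m) EM1 (F i).
Proof. exact: (ET_sum hbc2). Qed.
Lemma EM1_bim a z c : M1 a -> M2 z -> M1 c -> EM1 (a * z * c) = a * EM1 z * c.
Proof. exact: (ET_bim hM1 hbc2). Qed.
Lemma EM1_l a z : M1 a -> M2 z -> EM1 (a * z) = a * EM1 z.
Proof. exact: (ET_l hM1 hbc2). Qed.
Lemma EM1_r z c : M2 z -> M1 c -> EM1 (z * c) = EM1 z * c.
Proof. exact: (ET_r hM1 hbc2). Qed.
Lemma EM_one : EM 1 = 1.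
Proof. exact: (ET1 hqb hbc1 hlam (ssi_lam hssi)). Qed.
Lemma irr1 z : centralizer M1 M z -> exists c : k, z = c *: 1.
Proof. exact: (irr_up hM hNM hEN hqb hbc1 hlam (ssi_irr hssi)). Qed.
Lemma qb2_left z : M2 z ->
  \sum_(i < n) EM1 (z * (lam^-1 *: ((lam^-1 *: (xs i * e1)) * e2))) * (e2 * (e1 * ys i)) = z.
Proof. exact: (qb_left hM1 hMM1 EM_M hqb2 hbc2 hlam). Qed.
Lemma e1N x : N x -> e1 * x = x * e1. Proof. exact: (eS hbc1). Qed.
Lemma e2M x : M x -> e2 * x = x * e2. Proof. exact: (eS hbc2). Qed.
Lemma e1Te1 a : M a -> e1 * a * e1 = E a * e1. Proof. exact: (eTe hbc1). Qed.

Lemma sum_xEy : \sum_(i < n) xs i * E (ys i) = 1.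
Proof. by case: hqb=> _ /(_ 1 (sa1 hM)) [_ h]; rewrite -[RHS]h; apply: eq_bigr=> i _; rewrite mulr1. Qed.
Lemma sum_xy : \sum_(i < n) xs i * ys i = lam^-1 *: 1.
Proof. exact: (ssi_lam hssi). Qed.

Lemma EM_scalar w : M1 w -> (forall x, N x -> w * x = x * w) -> exists th : k, EM w = th *: 1.
Proof.
move=> hw hc; apply: (ssi_irr hssi); split; first by mem.
move=> x hx; rewrite -EM_r; [|mem|mem]; rewrite -EM_l; [|mem|mem].
by rewrite hc.
Qed.

Lemma Phi_scalar Z : M2 Z -> (forall x, N x -> Z * x = x * Z) ->
  exists th : k, EM (EM1 Z) = th *: 1.
Proof.
move=> hZ hc; apply: EM_scalar; first by mem.
move=> x hx; rewrite -EM1_l; [|mem|mem]; rewrite -EM1_r; [|mem|mem].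
by rewrite hc.
Qed.


Section G.
Variables (g : R) (hg : centralizer M2 M g).
Let hg2 : M2 g := hg.1.
Let hgc : forall x, M x -> g * x = x * g := hg.2.
Definition a' := (lam^-1 * lam^-1) *: EM1 (g * e1 * e2).

Lemma g_form : g = \sum_(i < n) xs i * a' * (e2 * (e1 * ys i)).
Proof.
rewrite -{1}(qb2_left hg2); apply: eq_bigr => i _; congr (_ * _).
have -> : g * (lam^-1 *: ((lam^-1 *: (xs i * e1)) * e2)) =
    (lam^-1 * lam^-1) *: (xs i * (g * e1 * e2)).
  rewrite -scalerAl -!scalerAr scalerA; congr (_ *: _).
  by rewrite !mulrA (hgc (xs_M i)).
rewrite EM1_scale; last by mem.
by rewrite EM1_l; [rewrite /a' scalerAr | mem | mem].
Qed.

Lemma a'_A : centralizer M1 N a'.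
Proof.
split; first by rewrite /a'; mem.
move=> x hx; rewrite /a' -scalerAl -scalerAr; congr (_ *: _).
rewrite -EM1_r; [|mem|mem]; rewrite -EM1_l; [|mem|mem].
congr (EM1 _).
rewrite -(mulrA _ e2 x) (e2M (N_M hx)) mulrA -(mulrA g e1 x) (e1N hx).
by rewrite mulrA (hgc (N_M hx)) !mulrA.
Qed.

Lemma ge1 : g * e1 = a' * e2 * e1.
Proof.
have ha'c := a'_A.2.
rewrite {1}g_form mulr_suml.
transitivity (\sum_(i < n) xs i * E (ys i) * (a' * e2 * e1));
  last by rewrite -mulr_suml sum_xEy mul1r.
apply: eq_bigr=> i _.
transitivity (xs i * a' * e2 * (e1 * ys i * e1)); first by rewrite !mulrA.
rewrite (e1Te1 (ys_M i)).
transitivity (xs i * (a' * (e2 * E (ys i))) * e1); first by rewrite !mulrA.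
rewrite (e2M (N_M (hEN (ys_M i)))).
transitivity (xs i * ((a' * E (ys i)) * e2) * e1); first by rewrite !mulrA.
by rewrite (ha'c _ (hEN (ys_M i))) !mulrA.
Qed.

Lemma Kval b' : centralizer M2 M b' ->
  EM1 (g * b') = lam^-1 *: EM (EM1 (a' * e2 * e1 * b')).
Proof.
case=> hb' hb'c.
have ha' := a'_A.
set W := a' * e2 * e1 * b'.
have hW : M2 W by rewrite /W; case: ha' => ??; mem.
have hK : EM1 (g * b') = \sum_(i < n) xs i * EM1 W * ys i.
  rewrite {1}g_form mulr_suml EM1_sum; last by move=> i; case: ha' => ??; mem.
  apply: eq_bigr=> i _.
  transitivity (EM1 (xs i * W * ys i)); last by rewrite EM1_bim; mem.
  congr (EM1 _).
  transitivity (xs i * a' * e2 * e1 * (ys i * b')); first by rewrite !mulrA.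
  by rewrite -(hb'c _ (ys_M i)) /W !mulrA.
have [kap hkap] : exists kap : k, EM1 (g * b') = kap *: 1.
  apply: irr1; split; first by mem.
  move=> x hx; rewrite -EM1_r; [|mem|mem]; rewrite -EM1_l; [|mem|mem].
  by rewrite -(mulrA g b' x) (hb'c x hx) mulrA (hgc hx) -mulrA.
have [th hth] : exists th : k, EM (EM1 W) = th *: 1.
  apply: Phi_scalar => // x hx.
  rewrite /W -(mulrA _ b' x) (hb'c x (N_M hx)).
  transitivity (a' * e2 * (e1 * x) * b'); first by rewrite !mulrA.
  rewrite (e1N hx); transitivity (a' * (e2 * x) * e1 * b'); first by rewrite !mulrA.
  rewrite (e2M (N_M hx)); transitivity ((a' * x) * e2 * e1 * b'); first by rewrite !mulrA.
  by rewrite (a'_A.2 x hx) !mulrA.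
have hsum : EM (\sum_(i < n) xs i * EM1 W * ys i) = th *: (lam^-1 *: 1).
  rewrite EM_sum; last by move=> i; mem.
  rewrite -sum_xy scaler_sumr; apply: eq_bigr => i _.
  rewrite EM_bim; [|mem|mem|mem].
  by rewrite hth -scalerAr -scalerAl mulr1.
have h1 : EM (EM1 (g * b')) = th *: (lam^-1 *: 1) by rewrite hK.
move: h1; rewrite hkap EM_scale ?EM_one; last by mem.
by move=> h1; rewrite h1 hth !scalerA mulrC.
Qed.

End G.

Section Key.
Variables (b : R) (hb : centralizer M2 M b) (m : nat) (b1 b2 : 'I_m -> R)
  (hb12 : forall j, centralizer M2 M (b1 j) /\ centralizer M2 M (b2 j))
  (hdelta : forall a a0, centralizer M1 N a -> centralizer M1 N a0 ->
       \sum_(j < m) pairing lam EM EM1 e1 e2 a (b1 j) *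
                    pairing lam EM EM1 e1 e2 a0 (b2 j)
       = pairing lam EM EM1 e1 e2 (a * a0) b).

Lemma hbM2 : M2 b. Proof. exact: hb.1. Qed.
Lemma hb1M2 j : M2 (b1 j). Proof. exact: (hb12 j).1.1. Qed.
Lemma hb2M2 j : M2 (b2 j). Proof. exact: (hb12 j).2.1. Qed.
Local Hint Resolve hbM2 hb1M2 hb2M2 : memdb.
Lemma hbc x : M x -> b * x = x * b. Proof. exact: hb.2. Qed.
Lemma hb1c j x : M x -> b1 j * x = x * b1 j. Proof. exact: (hb12 j).1.2. Qed.
Lemma hb2c j x : M x -> b2 j * x = x * b2 j. Proof. exact: (hb12 j).2.2. Qed.

Variables (g : R) (hg : centralizer M2 M g).
Let hg2 : M2 g := hg.1.
Let hgc : forall x, M x -> g * x = x * g := hg.2.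

Lemma kap_ex : exists kap : 'I_m -> k, forall j, EM1 (g * b2 j) = kap j *: 1.
Proof.
apply: (@fin_choice _ _ (fun j (c : k) => EM1 (g * b2 j) = c *: 1)) => j; apply: irr1; split; first by mem.
move=> x hx; rewrite -EM1_r; [|mem|mem]; rewrite -EM1_l; [|mem|mem].
by rewrite -(mulrA g) (hb2c j hx) mulrA (hgc hx) -mulrA.
Qed.

Variable kap : 'I_m -> k.
Hypothesis hkap : forall j, EM1 (g * b2 j) = kap j *: 1.

Definition Psi y' := EM1 (g * y' * b) - lam^-1 *: \sum_(j < m) kap j *: EM1 (e2 * y' * b1 j).

Lemma Psi_M1 y' : M1 y' -> M1 (Psi y').
Proof. by move=> hy; rewrite /Psi; mem. Qed.

Lemma gZ y : M1 y ->
  EM1 (g * (y * b - lam^-1 *: \sum_(j < m) b2 j * EM1 (e2 * y * b1 j))) = Psi y.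
Proof.
move=> hy; rewrite mulrBr -scalerAr mulr_sumr EM1_sub; [|mem|mem].
rewrite EM1_scale; last by mem.
rewrite EM1_sum; last by move=> j; mem.
rewrite /Psi mulrA; congr (_ - _ *: _); apply: eq_bigr => j _.
by rewrite mulrA (EM1_r (z := g * b2 j)); [rewrite hkap -scalerAl mul1r|mem|mem].
Qed.

Lemma Psi_sum p (Y : 'I_p -> R) : (forall t, M1 (Y t)) ->
  Psi (\sum_(t < p) Y t) = \sum_(t < p) Psi (Y t).
Proof.
move=> hY; rewrite /Psi sumrB; congr (_ - _).
  rewrite mulr_sumr mulr_suml EM1_sum; last by move=> t; mem.
  done.
rewrite -scaler_sumr; congr (_ *: _).
rewrite exchange_big /=; apply: eq_bigr => j _.
rewrite mulr_sumr mulr_suml EM1_sum; last by move=> t; mem.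
by rewrite scaler_sumr.
Qed.

Lemma Psi_pq p q : M p -> M q -> Psi (p * e1 * q) = p * Psi e1 * q.
Proof.
move=> hp hq; rewrite /Psi mulrBr mulrBl; congr (_ - _).
  have -> : g * (p * e1 * q) * b = p * (g * e1 * b) * q.
    by rewrite !mulrA (hgc hp) -!mulrA (hbc hq).
  by rewrite EM1_bim; mem.
rewrite -scalerAr -scalerAl mulr_sumr mulr_suml; congr (_ *: _).
apply: eq_bigr => j _; rewrite -scalerAr -scalerAl; congr (_ *: _).
have -> : e2 * (p * e1 * q) * b1 j = p * (e2 * e1 * b1 j) * q.
  by rewrite !mulrA (e2M hp) -!mulrA (hb1c j hq).
by rewrite EM1_bim; mem.
Qed.

Lemma PhiP x y : EM (EM1 (x * e2 * e1 * y)) = lam ^+ 2 *: pairing lam EM EM1 e1 e2 x y.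
Proof. by rewrite /pairing scalerA mulfV ?scale1r // expf_neq0 // hlam. Qed.

Lemma AB_commN a b' : centralizer M1 N a -> centralizer M2 M b' ->
  forall x, N x -> a * e2 * e1 * b' * x = x * (a * e2 * e1 * b').
Proof.
case=> ha hac [hb' hb'c] x hx.
rewrite -(mulrA _ b' x) (hb'c x (N_M hx)).
transitivity (a * e2 * (e1 * x) * b'); first by rewrite !mulrA.
rewrite (e1N hx); transitivity (a * (e2 * x) * e1 * b'); first by rewrite !mulrA.
rewrite (e2M (N_M hx)); transitivity ((a * x) * e2 * e1 * b'); first by rewrite !mulrA.
by rewrite (hac x hx) !mulrA.
Qed.

Lemma P_scalar a b' : centralizer M1 N a -> centralizer M2 M b' ->
  exists th : k, pairing lam EM EM1 e1 e2 a b' = th *: 1.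
Proof.
move=> ha hb'; case: (Phi_scalar (Z := a * e2 * e1 * b')).
- by case: ha => ??; case: hb' => ??; mem.
- exact: AB_commN.
by move=> th hth; exists (lam ^- 2 * th); rewrite /pairing hth scalerA.
Qed.

Lemma EM_cPsi c : centralizer M1 N c -> EM (c * Psi e1) = 0.
Proof.
move=> hcA; have [hc hcc] := hcA.
have ha0 := a'_A hg; set a0 := a' g in ha0 *.
have step1 : c * Psi e1 = EM1 (c * (a0 * e2 * e1 * b)) -
    lam^-1 *: \sum_(j < m) kap j *: EM1 (c * (e2 * e1 * b1 j)).
  rewrite /Psi mulrBr -scalerAr mulr_sumr; congr (_ - _ *: _).
    by rewrite -EM1_l; [rewrite (ge1 hg)|mem|mem].
  apply: eq_bigr => j _; rewrite -scalerAr -EM1_l //; mem.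
have hA0 : M1 a0 by case: ha0.
rewrite step1 EM_sub; [|mem|mem].
rewrite EM_scale; last by mem.
rewrite EM_sum; last by move=> j; mem.
have hcomm : forall j, pairing lam EM EM1 e1 e2 c (b1 j) * pairing lam EM EM1 e1 e2 a0 (b2 j) =
    pairing lam EM EM1 e1 e2 a0 (b2 j) * pairing lam EM EM1 e1 e2 c (b1 j).
  move=> j; case: (P_scalar ha0 (hb12 j).2) => th ->.
  by rewrite scal_comm.
have hk : forall j, kap j *: 1 = (lam^-1 * lam ^+ 2) *: pairing lam EM EM1 e1 e2 a0 (b2 j).
  by move=> j; rewrite -hkap (Kval hg (hb12 j).2) PhiP scalerA.
have hterm : forall j, EM (kap j *: EM1 (c * (e2 * e1 * b1 j))) =
    (lam^-1 * lam ^+ 2 * lam ^+ 2) *: (pairing lam EM EM1 e1 e2 c (b1 j) *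
      pairing lam EM EM1 e1 e2 a0 (b2 j)).
  move=> j; rewrite EM_scale; last by mem.
  rewrite (mulrA c (e2 * e1) (b1 j)) (mulrA c e2 e1) PhiP.
  transitivity ((kap j *: 1) * (lam ^+ 2 *: pairing lam EM EM1 e1 e2 c (b1 j)));
    first by rewrite -scalerAl mul1r.
  by rewrite hk -scalerAl -scalerAr scalerA hcomm.
rewrite (eq_bigr _ (fun j _ => hterm j)) -scaler_sumr (hdelta hcA ha0).
rewrite (mulrA c (a0 * e2 * e1) b) (mulrA c (a0 * e2) e1) (mulrA c a0 e2) PhiP.
have hsc : lam^-1 * (lam^-1 * lam ^+ 2 * lam ^+ 2) = lam ^+ 2.
  by field; exact: hlam.
by rewrite [lam^-1 *: _]scalerA hsc subrr.
Qed.

Lemma Psi_e1 : Psi e1 = 0.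
Proof.
case: hd2 => [[p [u [hu hfree]]] _].
case: (dual_basis hM hNM hEN hqb hbc1 hlam hu hfree) => f [hf hexp].
have hw : M1 (Psi e1) by apply: Psi_M1; mem.
rewrite (hexp _ hw); apply: big1 => l _.
by rewrite EM_cPsi ?mulr0.
Qed.

Lemma Psi_y y : M1 y -> Psi y = 0.
Proof.
move=> hy; case: (bc_span hbc1 hy) => p [pp [qq [hpq ->]]].
rewrite Psi_sum; last by move=> t; case: (hpq t) => ??; mem.
apply: big1 => t _; case: (hpq t) => ??.
by rewrite Psi_pq // Psi_e1 mulr0 mul0r.
Qed.

End Key.

Lemma main_res b (hb : centralizer M2 M b) m (b1 b2 : 'I_m -> R)
  (hb12 : forall j, centralizer M2 M (b1 j) /\ centralizer M2 M (b2 j))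
  (hdelta : forall a a0, centralizer M1 N a -> centralizer M1 N a0 ->
       \sum_(j < m) pairing lam EM EM1 e1 e2 a (b1 j) *
                    pairing lam EM EM1 e1 e2 a0 (b2 j)
       = pairing lam EM EM1 e1 e2 (a * a0) b)
  y (hy : M1 y) :
  y * b = lam^-1 *: \sum_(j < m) b2 j * EM1 (e2 * y * b1 j).
Proof.
have hbb := hbM2 hb; have hb1 := hb1M2 hb12; have hb2 := hb2M2 hb12.
have hZ : M2 (y * b - lam^-1 *: \sum_(j < m) b2 j * EM1 (e2 * y * b1 j)) by mem.
apply/eqP; rewrite -subr_eq0; apply/eqP.
case: hd2 => _ [p [v [hv hfree]]].
case: (dual_basis hM1 hMM1 EM_M hqb2 hbc2 hlam hv hfree) => gs [hgs hexp].
rewrite (hexp _ hZ); apply: big1 => i _.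
case: (kap_ex hb12 (hgs i)) => kap hkap.
by rewrite (gZ hb hb12 (hgs i) hkap hy) (Psi_y hb hb12 hdelta (hgs i) hkap hy) mulr0.
Qed.

End Main.

Unset Implicit Arguments.

Theorem proposition4p6 (k : fieldType) (R : algType k)
  (N M M1 M2 : R -> Prop) (E EM EM1 : R -> R) (n : nat) (xs ys : 'I_n -> R)
  (lam : k) (e1 e2 : R) :
  ss_irreducible N M E xs ys lam ->
  basic_construction N M M1 E xs ys lam e1 EM ->
  basic_construction M M1 M2 EM (fun i => lam^-1 *: (xs i * e1))
    (fun i => e1 * ys i) lam e2 EM1 ->
  depth2 N M M1 M2 ->
  forall b : R, centralizer M2 M b ->
  (* Delta(b) = sum_j b1 j ⊗ b2 j in B ⊗ B *)
  forall (m : nat) (b1 b2 : 'I_m -> R),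
    (forall j, centralizer M2 M (b1 j) /\ centralizer M2 M (b2 j)) ->
    (forall a a', centralizer M1 N a -> centralizer M1 N a' ->
       \sum_(j < m) pairing lam EM EM1 e1 e2 a (b1 j) *
                    pairing lam EM EM1 e1 e2 a' (b2 j)
       = pairing lam EM EM1 e1 e2 (a * a') b) ->
  forall y : R, M1 y ->
    y * b = lam^-1 *: \sum_(j < m) b2 j * EM1 (e2 * y * b1 j).
Proof.
move=> hssi hbc1 hbc2 hd2 b hb m b1 b2 hb12 hdelta y hy.
exact: (main_res hssi hbc1 hbc2 hd2 hb hb12 hdelta hy).
Qed.
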